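(* Let $X=(T,E)$ and $Y=(Z,F)$ be colored graphs and let $W=(W_{i\alpha,j\beta})_{i\alpha,j\beta\in T\times Z}$ be the fundamental magic biunitary of $A(X*Y)$. Then for all $\alpha,\beta\in Z$ and all $i,j\in T$, $$\sum_{k\in T}W_{i\alpha,k\beta}=\sum_{k\in T}W_{k\alpha,j\beta};$$ in particular the element $V_{\alpha\beta}:=\sum_kW_{i\alpha,k\beta}$ is independent of $i$ (and equals $\sum_kW_{k\alpha,j\beta}$ for any $j$). The matrix $V=(V_{\alpha\beta})_{\alpha,\beta\in Z}$ is a magic biunitary.
   Context: A colored graph $X=(V,E)$ is a finite set $V$ with a partition $E=\{E_1,\dots,E_p\}$ of $(V\times V)-\Delta_V$. Free product: for $X=(T,E)$, $E=\{E_1,\dots,E_p\}$, and $Y=(Z,F)$, $F=\{F_1,\dots,F_q\}$, $X*Y$ has vertex set $T\times Z$ and partition $\{E_r^\circ\}\cup\{F_s^\circ\}$, $E_r^\circ=\{(i\alpha,j\alpha)\mid(i,j)\in E_r,\alpha\in Z\}$, $F_s^\circ=\{(i\alpha,j\beta)\mid i,j\in T,(\alpha,\beta)\in F_s\}$. A magic biunitary is a square matrix of projections whose rows and columns are partitions of unity. For a colored graph on $N$ vertices, $A(\cdot)$ is the quotient of the universal C*-algebra generated by the entries of an $N\times N$ magic biunitary $W$ by the relations $Wd=dW$, $d$ the Laplacian ($d_{ii}=0$, $d_{xy}=c(k)$ for $(x,y)$ in the $k$-th class, $c$ injective into ${\mathbb C}$); equivalently by the relations $\sum_{z:(z,y)\in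 C}W_{xz}=\sum_{z:(x,z)\in C}W_{zy}$ for every class $C$ of the partition. *)

(* Defs.v *)
From HB Require Import structures.
From mathcomp Require Import all_boot all_order all_algebra.
Set Implicit Arguments. Unset Strict Implicit. Unset Printing Implicit Defensive.
Import GRing.Theory.
Local Open Scope ring_scope.

Definition is_involution (A : pzRingType) (star : A -> A) : Prop :=
  [/\ forall x y, star (x + y) = star x + star y,
      forall x y, star (x * y) = star y * star x,
      forall x, star (star x) = x & star 1 = 1].

Definition offdiag (V : finType) : {set V * V} := [set u | u.1 != u.2].

Definition colored_graph (V : finType) (E : {set {set V * V}}) : Prop :=
  partition E (offdiag V).

Definition free_product (T Z : finType)
  (E : {set {set T * T}}) (F : {set {set Z * Z}}) : {set {set (T * Z) * (T * Z)}} :=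
  [set [set (((u.1, a), (u.2, a)) : (T * Z) * (T * Z)) | u in C, a in [set: Z]] | C : {set T * T} in E]
  :|: [set [set (((x.1, u.1), (x.2, u.2)) : (T * Z) * (T * Z)) | x in [set: T * T], u in C]
         | C : {set Z * Z} in F].

Definition is_proj (A : pzRingType) (star : A -> A) (p : A) : Prop :=
  p * p = p /\ star p = p.

Definition partition_of_unity (A : pzRingType) (star : A -> A) (I : finType)
  (f : I -> A) : Prop :=
  [/\ forall i, is_proj star (f i),
      forall i j, i != j -> f i * f j = 0 &
      \sum_(i : I) f i = 1].

Definition magic (A : pzRingType) (star : A -> A) (I : finType) (W : I -> I -> A) : Prop :=
  (forall x, partition_of_unity star (W x)) /\
  (forall y, partition_of_unity star (fun x => W x y)).

Definition A_relations (A : pzRingType) (star : A -> A) (V : finType)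
  (E : {set {set V * V}}) (W : V -> V -> A) : Prop :=
  magic star W /\
  forall C, C \in E -> forall x y : V,
    \sum_(z | (z, y) \in C) W x z = \sum_(z | (x, z) \in C) W z y.

(* Main.v *)
Require Import Defs.
From HB Require Import structures.
From mathcomp Require Import all_boot all_order all_algebra.
Import GRing.Theory.
Local Open Scope ring_scope.
Set Implicit Arguments. Unset Strict Implicit.

Lemma part_sum (T : finType) (E : {set {set T * T}}) (HE : colored_graph E)
  (R : nmodType) (q : T -> T * T) (h : T -> R) :
  \sum_(C in E) \sum_(k | q k \in C) h k = \sum_(k | q k \in offdiag T) h k.
Proof.
case/and3P: HE => /eqP Hcov Htriv H0.
under eq_bigr => C _ do rewrite big_mkcond.
rewrite exchange_big /= [RHS]big_mkcond /=; apply: eq_bigr => k _.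
rewrite -big_mkcondr /= -Hcov.
case: (boolP (q k \in cover E)) => Hq.
  rewrite (big_pred1 (pblock E (q k))) // => C /=.
  apply/andP/eqP.
    by case=> HC HqC; rewrite (def_pblock Htriv HC HqC).
  by move=> ->; rewrite pblock_mem // mem_pblock.
rewrite big_pred0 // => C; apply/andP => -[HC HqC].
by move/negP: Hq; apply; apply/bigcupP; exists C.
Qed.

Lemma mem_Co (T Z : finType) (C : {set T * T}) (z y : T * Z) :
  ((z, y) \in [set (((u.1, a), (u.2, a)) : (T * Z) * (T * Z)) | u in C, a in [set: Z]])
  = (z.2 == y.2) && ((z.1, y.1) \in C).
Proof.
apply/imset2P/andP.
  case=> u a Hu _ [-> ->] /=; split => //; by case: u Hu.
case: z y => [k a] [l b] /= [/eqP -> H]; exists (k, l) b => //.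
Qed.

Lemma sum_fst (T Z : finType) (R : nmodType) (g : T * Z -> R) (b : Z) :
  \sum_(z | z.2 == b) g z = \sum_(k : T) g (k, b).
Proof.
transitivity (\sum_(k : T) \sum_(a | a == b) g (k, a)); last first.
  by apply: eq_bigr => k _; rewrite big_pred1_eq.
rewrite pair_big_dep /=; by apply: eq_big => -[].
Qed.

Lemma sum_all (T Z : finType) (R : nmodType) (g : T * Z -> R) :
  \sum_(b : Z) \sum_(k : T) g (k, b) = \sum_z g z.
Proof. by rewrite exchange_big pair_big /=; apply: eq_bigr => -[]. Qed.

Lemma pu_mul (A : pzRingType) (star : A -> A) (I : finType) (f : I -> A)
  (Hf : partition_of_unity star f) (P Q : pred I) :
  (\sum_(i | P i) f i) * (\sum_(j | Q j) f j) = \sum_(i | P i && Q i) f i.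
Proof.
case: Hf => Hp Ho _.
rewrite big_distrl /= [RHS]big_mkcondr /=; apply: eq_bigr => i _.
rewrite big_distrr /=.
case: (boolP (Q i)) => HQ.
  rewrite (bigD1 i) //= big1 ?addr0; first by case: (Hp i).
  by move=> j /andP [_ ]; rewrite eq_sym => /Ho.
by rewrite big1 // => j Hj; apply: Ho; apply: contraNneq HQ => ->.
Qed.

Lemma star_sum (A : pzRingType) (star : A -> A) (Hstar : is_involution star)
  (I : finType) (P : pred I) (f : I -> A) :
  star (\sum_(i | P i) f i) = \sum_(i | P i) star (f i).
Proof.
case: Hstar => Hadd _ _ _.
have H0 : star 0 = 0.
  by apply: (addrI (star 0)); rewrite -Hadd !addr0.
exact: (big_morph star Hadd H0).
Qed.

Lemma pu_sub (A : pzRingType) (star : A -> A) (Hstar : is_involution star)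
  (I J : finType) (f : I -> A) (Hf : partition_of_unity star f)
  (P : J -> pred I) :
  (forall a b, a != b -> forall i, P a i -> P b i -> False) ->
  (\sum_(a : J) \sum_(i | P a i) f i = 1) ->
  partition_of_unity star (fun a => \sum_(i | P a i) f i).
Proof.
move=> Hdis Hsum; split => //.
- move=> a; split; first by rewrite (pu_mul Hf) (eq_bigl (P a)) // => i; rewrite andbb.
  rewrite star_sum //; apply: eq_bigr => i _; by case: Hf => Hp _ _; case: (Hp i).
- move=> a b Hab; rewrite (pu_mul Hf) big_pred0 // => i.
  by apply/andP => -[H1 H2]; apply: (Hdis a b Hab i).
Qed.

Lemma pu_ext (A : pzRingType) (star : A -> A) (I : finType) (f g : I -> A) :
  f =1 g -> partition_of_unity star f -> partition_of_unity star g.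
Proof.
move=> Hfg [H1 H2 H3]; split.
- by move=> i; rewrite -Hfg.
- by move=> i j Hij; rewrite -!Hfg; apply: H2.
- by rewrite -(eq_bigr _ (fun i _ => Hfg i)).
Qed.

Theorem lemma6p1 (A : pzRingType) (star : A -> A) (Hstar : is_involution star)
  (T Z : finType) (E : {set {set T * T}}) (F : {set {set Z * Z}})
  (HE : colored_graph E) (HF : colored_graph F)
  (W : T * Z -> T * Z -> A) (HW : A_relations star (free_product E F) W) :
  (forall (a b : Z) (i j : T),
      \sum_(k : T) W (i, a) (k, b) = \sum_(k : T) W (k, a) (j, b)) /\
  (forall i0 : T, magic star (fun a b : Z => \sum_(k : T) W (i0, a) (k, b))).
Proof.
case: HW => [[Hrow Hcol] Hrel].
have claim1 : forall (a b : Z) (i j : T),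
    \sum_(k : T) W (i, a) (k, b) = \sum_(k : T) W (k, a) (j, b).
  move=> a b i j.
  have key : \sum_(C in E) \sum_(k | (k, j) \in C) W (i, a) (k, b)
           = \sum_(C in E) \sum_(k | (i, k) \in C) W (k, a) (j, b).
    apply: eq_bigr => C HC.
    have HCo : [set (((u.1, a0), (u.2, a0)) : (T * Z) * (T * Z)) | u in C, a0 in [set: Z]]
               \in free_product E F.
      by apply/setUP; left; apply/imsetP; exists C.
    have := Hrel _ HCo (i, a) (j, b).
    under eq_bigl => z do rewrite mem_Co /=.
    under [X in _ = X -> _]eq_bigl => z do rewrite mem_Co /=.
    move=> Hr.
    have E1 : \sum_(k | (k, j) \in C) W (i, a) (k, b)
            = \sum_(z : T * Z | (z.2 == b) && ((z.1, j) \in C)) W (i, a) z.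
      transitivity (\sum_(k | (k, j) \in C) \sum_(a0 | a0 == b) W (i, a) (k, a0)).
        by apply: eq_bigr => k _; rewrite big_pred1_eq.
      rewrite pair_big_dep /=; apply: eq_big => -[k a0] //=; by rewrite andbC.
    have E2 : \sum_(k | (i, k) \in C) W (k, a) (j, b)
            = \sum_(z : T * Z | (a == z.2) && ((i, z.1) \in C)) W z (j, b).
      transitivity (\sum_(k | (i, k) \in C) \sum_(a0 | a0 == a) W (k, a0) (j, b)).
        by apply: eq_bigr => k _; rewrite big_pred1_eq.
      rewrite pair_big_dep /=; apply: eq_big => -[k a0] //=; by rewrite andbC eq_sym.
    by rewrite E1 E2.
  rewrite (part_sum HE (fun k => (k, j))) (part_sum HE (fun k => (i, k))) in key.
  rewrite (bigD1 j) // [RHS](bigD1 i) //=.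
  congr (_ + _).
  have e1 : forall k, ((k, j) \in offdiag T) = (k != j) by move=> k; rewrite inE.
  have e2 : forall k, ((i, k) \in offdiag T) = (k != i) by move=> k; rewrite inE eq_sym.
  by rewrite (eq_bigl _ _ e1) (eq_bigl _ _ e2) in key.
split => // i0; split.
- move=> a.
  have Hpu := Hrow (i0, a).
  have := @pu_sub A star Hstar _ Z _ Hpu (fun b z => z.2 == b).
  under eq_bigr => b _ do rewrite sum_fst.
  move=> H; have H' := H _ _; clear H.
  have := H' (fun b c Hbc z Hb Hc => (negP Hbc) (introT eqP (etrans (esym (eqP Hb)) (eqP Hc)))).
  move=> H; have := H (etrans (sum_all _) (let: And3 _ _ s := Hpu in s)).
  by apply: pu_ext => b; rewrite sum_fst.
- move=> b.
  have Hpu := Hcol (i0, b).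
  have := @pu_sub A star Hstar _ Z _ Hpu (fun a z => z.2 == a).
  move=> H; have H' := H _ _; clear H.
  have := H' (fun b c Hbc z Hb Hc => (negP Hbc) (introT eqP (etrans (esym (eqP Hb)) (eqP Hc)))).
  move=> H; have := H (etrans (eq_bigr _ (fun a _ => sum_fst _ _)) (etrans (sum_all _) (let: And3 _ _ s := Hpu in s))).
  by apply: pu_ext => a /=; rewrite sum_fst (claim1 a b i0 i0).
Qed.
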